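(* Let $\Lambda$ be a block of bounded weights. The map $a\lambda b\mapsto\mathrm{cl}(a\lambda b)$ is a degree-preserving bijection between the set of oriented circle diagrams with underlying weight in $\Lambda$ and the set of closed oriented circle diagrams with underlying weight in $\mathrm{cl}(\Lambda)$.
   Context: A number line carries vertices indexed by consecutive integers. A weight labels each vertex by $\circ,\times,\vee,\wedge$; bounded if finitely many vertices. A block is an equivalence class of weights under permuting $\vee$'s and $\wedge$'s. Cup diagrams: finitely many non-crossing cups joining pairs of vertices and rays down to infinity; cap diagrams similarly upward; $c^*$ mirror image. $c\lambda$ is an oriented cup diagram if free vertices are $\circ/\times$, cups have one $\vee$ and one $\wedge$ end, ray vertices are $\vee/\wedge$, and no two rays are labelled $\vee,\wedge$ in that order left to right; $\lambda c$ (cap diagram) oriented iff $c^*\lambda$ is. Degree: number of clockwise cups/caps (left end $\wedge$). Oriented circle diagram $a\lambda b$: $a\lambda$ and $\lambda b$ oriented; $\deg(a\lambda b)=\deg(a\lambda)+\deg(\lambda b)$; closed if no rays. $\underline\lambda$: unique cup diagram with $\underline\lambda\lambda$ oriented of degree $0$; $\overline\lambda=(\underline\lambda)^*$. If $a\lambda b$ is oriented with $\lambda\in\Lambda$, then $a=\underline\alpha$, $b=\overline\beta$ for unique $\alpha,\beta\in\Lambda$. Closure: if weights in $\Lambda$ have $p$ labels $\wedge$ and $q$ labels $\vee$, $\mathrm{cl}(\lambda)$ adds $p$ vertices labelled $\vee$ at the left end and $q$ labelled $\wedge$ at the right end; for $\alpha,\beta\in\Lambda$, $\mathrm{cl}(\underline\alpha):=\underline{\mathrm{cl}(\alpha)}$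 and $\mathrm{cl}(\overline\beta):=\overline{\mathrm{cl}(\beta)}$; and $\mathrm{cl}(a\lambda b):=\mathrm{cl}(a)\mathrm{cl}(\lambda)\mathrm{cl}(b)$. *)

(* Defs.v *)
From HB Require Import structures.
From mathcomp Require Import all_boot all_order all_fingroup.
Set Implicit Arguments. Unset Strict Implicit. Unset Printing Implicit Defensive.

(** Vertex labels of a weight: circ, cross, vee (down), wedge (up). *)
Inductive label := Circ | Cross | Vee | Wedge.

Definition lab2o (l : label) : 'I_4 :=
  match l with Circ => inord 0 | Cross => inord 1 | Vee => inord 2 | Wedge => inord 3 end.
Definition o2lab (i : 'I_4) : label :=
  match val i with 0 => Circ | 1 => Cross | 2 => Vee | _ => Wedge end.
Lemma lab2oK : cancel lab2o o2lab.
Proof. by case; rewrite /o2lab /= inordK. Qed.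
HB.instance Definition _ := Finite.copy label (can_type lab2oK).

Definition weight n := {ffun 'I_n -> label}.

(** Cup (or cap) diagrams on vertices 0..n-1: each vertex is
    free (None), the end of a ray (Some None), or the end of a cup/cap
    whose other end is j (Some (Some j)).  A cap diagram is stored as its
    mirror image c^* (a cup diagram), which has the same data. *)
Definition cdiag n := {ffun 'I_n -> option (option 'I_n)}.

Definition is_diag n (c : cdiag n) : bool :=
  [forall i, forall j, (c i == Some (Some j)) ==>
      ((i != j) && (c j == Some (Some i)))] &&
  (* non-crossing: nothing strictly inside a cup crosses it, and no ray
     starts strictly inside a cup *)
  [forall i, forall j, forall k : 'I_n, ((c i == Some (Some j)) && (i < k < j)) ==>
      match c k with
      | None => true
      | Some None => false
      | Some (Some l) => (i < l < j)
      end].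

Definition oriented n (c : cdiag n) (la : weight n) : bool :=
  [forall i, match c i with
             | None => la i \in [:: Circ; Cross]
             | Some None => la i \in [:: Vee; Wedge]
             | Some (Some j) => [&& la i \in [:: Vee; Wedge],
                                    la j \in [:: Vee; Wedge] & la i != la j]
             end] &&
  [forall i : 'I_n, forall j : 'I_n, ((i < j) && (c i == Some None) && (c j == Some None)) ==>
      ~~ ((la i == Vee) && (la j == Wedge))].

(** degree: number of clockwise cups (left end labelled wedge). *)
Definition deg n (c : cdiag n) (la : weight n) : nat :=
  #|[pred i : 'I_n | if c i is Some (Some j) then (i < j) && (la i == Wedge)
                     else false]|.

Definition no_rays n (c : cdiag n) : bool := [forall i, c i != Some None].

(** underline lambda: the unique cup diagram c with c lambda oriented of
    degree 0 (defined by choice over the finite type of diagrams); the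
    cap diagram overline lambda = (underline lambda)^* has the same data. *)
Definition underline n (la : weight n) : cdiag n :=
  odflt [ffun _ => None]
    [pick c : cdiag n | [&& is_diag c, oriented c la & deg c la == 0]].

Definition block n (l0 : weight n) : {set weight n} :=
  [set mu : weight n | [exists s : {perm 'I_n},
     [forall i, (l0 i \in [:: Circ; Cross]) ==> (s i == i)] &&
     [forall i, mu i == l0 (s i)]]].

Definition count_lab n (x : label) (la : weight n) : nat := #|[pred i | la i == x]|.

(** closure: add p vees at the left end and q wedges at the right end. *)
Definition cl n p q (la : weight n) : weight (p + n + q) :=
  [ffun i => match split i with
             | inr _ => Wedge
             | inl j => match split j with inl _ => Vee | inr k => la k end
             end].

(** Oriented circle diagrams a lambda b with weight in L
    (triples ((a, lambda), b); b stored as b^* ). *)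
Definition ocd n (L : {set weight n}) : {set cdiag n * weight n * cdiag n} :=
  [set x | [&& is_diag x.1.1, is_diag x.2, x.1.2 \in L,
               oriented x.1.1 x.1.2 & oriented x.2 x.1.2]].

Definition closed_ocd n (L : {set weight n}) : {set cdiag n * weight n * cdiag n} :=
  [set x in ocd L | no_rays x.1.1 && no_rays x.2].

Definition ocd_deg n (x : cdiag n * weight n * cdiag n) : nat :=
  deg x.1.1 x.1.2 + deg x.2 x.1.2.

(** cl(a lambda b) = cl(a) cl(lambda) cl(b), where for a = underline alpha,
    cl(a) = underline (cl alpha), and for b = overline beta,
    cl(b) = overline (cl beta), alpha, beta in L. *)
Definition clD n p q (L : {set weight n}) (x : cdiag n * weight n * cdiag n)
  : cdiag (p + n + q) * weight (p + n + q) * cdiag (p + n + q) :=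
  let la := cl p q x.1.2 in
  match [pick al in L | underline al == x.1.1],
        [pick be in L | underline be == x.2] with
  | Some al, Some be => (underline (cl p q al), la, underline (cl p q be))
  | _, _ => (underline la, la, underline la)
  end.

(* Main.v *)
Require Import Defs.
From mathcomp Require Import all_boot all_order all_fingroup.
From mathcomp Require Import zify.
Set Implicit Arguments. Unset Strict Implicit. Unset Printing Implicit Defensive.

Definition leqb (x y : label) := match x, y with
 | Circ, Circ | Cross, Cross | Vee, Vee | Wedge, Wedge => true | _, _ => false end.
Lemma labE x y : (x == y) = leqb x y.
Proof. by apply/eqP/idP; case: x; case: y. Qed.

Definition VW (l : label) := (l == Vee) || (l == Wedge).

Lemma inCC l : (l \in [:: Circ; Cross]) = ~~ VW l.
Proof. by rewrite /VW !inE !labE; case: l. Qed.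
Lemma inVW l : (l \in [:: Vee; Wedge]) = VW l.
Proof. by rewrite /VW !inE !labE; case: l. Qed.

Section Diag.
Variable N : nat.
Implicit Types (c : cdiag N) (b : weight N) (i j k : 'I_N).

Lemma diag_sym c i j : is_diag c -> c i = Some (Some j) ->
  c j = Some (Some i) /\ i != j.
Proof.
case/andP=> /forallP H1 _ Hij; move: (H1 i) => /forallP /(_ j) /implyP.
by rewrite Hij eqxx => /(_ isT) /andP [ne /eqP].
Qed.

Lemma diag_in c i j k : is_diag c -> c i = Some (Some j) -> i < k < j ->
  match c k with None => true | Some None => false
  | Some (Some l) => i < l < j end.
Proof.
case/andP=> _ /forallP H2 Hij Hk.
move: (H2 i) => /forallP /(_ j) /forallP /(_ k) /implyP.
by rewrite Hij eqxx Hk => /(_ isT).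
Qed.

Lemma diagI c :
  (forall i j, c i = Some (Some j) -> c j = Some (Some i) /\ i != j) ->
  (forall i j k, c i = Some (Some j) -> i < k < j -> match c k with None => true | Some None => false
  | Some (Some l) => i < l < j end) -> is_diag c.
Proof.
move=> H1 H2; apply/andP; split; apply/forallP=> i; apply/forallP=> j.
  apply/implyP=> /eqP /H1 [-> ->]; by rewrite eqxx.
apply/forallP=> k; apply/implyP=> /andP [/eqP Hij Hk]; exact: H2 Hij Hk.
Qed.

Lemma or_none c b i : oriented c b -> c i = None -> ~~ VW (b i).
Proof. by case/andP=> /forallP /(_ i) + _ E; rewrite E inCC. Qed.
Lemma or_ray c b i : oriented c b -> c i = Some None -> VW (b i).
Proof. by case/andP=> /forallP /(_ i) + _ E; rewrite E inVW. Qed.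
Lemma or_cup c b i j : oriented c b -> c i = Some (Some j) ->
  [/\ VW (b i), VW (b j) & b i != b j].
Proof. by case/andP=> /forallP /(_ i) + _ E; rewrite E !inVW => /and3P [-> -> ->]. Qed.
Lemma or_rays c b i j : oriented c b -> c i = Some None -> c j = Some None ->
  i < j -> b i = Vee -> b j = Wedge -> False.
Proof.
case/andP=> _ /forallP /(_ i) /forallP /(_ j) /implyP H Ei Ej lij bi bj.
by move: H; rewrite Ei Ej lij bi bj !eqxx => /(_ isT).
Qed.

Lemma orientedI c b :
  (forall i, c i = None -> ~~ VW (b i)) ->
  (forall i, c i = Some None -> VW (b i)) ->
  (forall i j, c i = Some (Some j) -> [/\ VW (b i), VW (b j) & b i != b j]) ->
  (forall i j, c i = Some None -> c j = Some None -> i < j -> b i = Vee -> b j = Wedge -> False) ->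
  oriented c b.
Proof.
move=> H0 H1 H2 H3; apply/andP; split; apply/forallP=> i.
  case E: (c i) => [[j|]|]; rewrite ?inCC ?inVW.
  - by case: (H2 _ _ E) => -> -> ->.
  - exact: H1.
  - exact: H0.
apply/forallP=> j; apply/implyP=> /andP [/andP [lij /eqP Ei] /eqP Ej].
by apply/negP=> /andP [/eqP bi /eqP bj]; apply: (H3 i j).
Qed.

Lemma deg0P c b : deg c b = 0 <-> (forall i j, c i = Some (Some j) -> i < j -> b i != Wedge).
Proof.
split.
  move=> /card0_eq H i j E lij; move: (H i); rewrite !inE /= E lij /=.
  by move=> ->.
move=> H; apply: eq_card0 => i; rewrite !inE /=.
case E: (c i) => [[j|]|] //; apply/negP => /andP [lij bi].
by move: (H _ _ E lij); rewrite bi.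
Qed.

Definition D0 c b := [/\ is_diag c, oriented c b & deg c b = 0].

Lemma vw_cases l : VW l -> l = Vee \/ l = Wedge.
Proof. by rewrite /VW !labE; case: l; auto. Qed.

Lemma cupVW c b i j : D0 c b -> c i = Some (Some j) -> i < j ->
  b i = Vee /\ b j = Wedge.
Proof.
case=> _ Ho /deg0P Hd E lij; have := Hd _ _ E lij.
case: (or_cup Ho E) => /vw_cases [] -> /vw_cases [] ->; rewrite ?labE //.
Qed.

Lemma cupVW' c b i j : D0 c b -> c i = Some (Some j) -> j < i ->
  b j = Vee /\ b i = Wedge.
Proof.
move=> H E lji; have [E' _] := diag_sym (let: And3 h _ _ := H in h) E.
exact: cupVW H E' lji.
Qed.

End Diag.

Section Uniq.
Variable N : nat.
Implicit Types (c : cdiag N) (b : weight N) (i j k : 'I_N).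

Lemma vw_notnone c b i : oriented c b -> VW (b i) -> c i <> None.
Proof. by move=> Ho Hv E; move: (or_none Ho E); rewrite Hv. Qed.

Lemma notnone_lab c b i x : oriented c b -> b i = x -> VW x -> c i <> None.
Proof. by move=> Ho bi Hx; apply: vw_notnone Ho _; rewrite bi. Qed.

Lemma VWV : VW Vee. Proof. by rewrite /VW !labE. Qed.
Lemma VWW : VW Wedge. Proof. by rewrite /VW !labE. Qed.

Lemma ADJ c b i j : D0 c b -> b i = Vee -> b j = Wedge -> i < j ->
  (forall m : 'I_N, i < m < j -> ~~ VW (b m)) -> c i = Some (Some j).
Proof.
move=> H bi bj lij Hm; have [Hd Ho Hdeg] := H.
case E: (c i) => [[l|]|].
- have [El nil] := diag_sym Hd E.
  case: (ltngtP l i) => [lli|lil|eli].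
  + by have [_ ]:= cupVW' H E lli; rewrite bi.
  + case: (ltngtP l j) => [llj|ljl|elj].
    * have [_ /negP + _] := or_cup Ho E; by move: (Hm l); rewrite lil llj => /(_ isT) /negP.
    * have := diag_in Hd E (i:=i) (k:=j); rewrite lij ljl => /(_ isT).
      case Ej: (c j) => [[m|]|] //.
      - case/andP=> lim lml; case: (ltngtP m j) => [lmj|ljm|emj].
        + have [_ /negP + _] := or_cup Ho Ej; by move: (Hm m); rewrite lim lmj => /(_ isT) /negP.
        + by have [] := cupVW H Ej ljm; rewrite bj.
        + have [_] := diag_sym Hd Ej; by rewrite (val_inj emj) eqxx.
      - by move=> _; case: (notnone_lab Ho bj VWW Ej).
    * by congr (Some (Some _)); apply: val_inj.
  + by have [_] := diag_sym Hd E; rewrite (val_inj eli) eqxx.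
- case Ej: (c j) => [[m|]|].
  + case: (ltngtP m j) => [lmj|ljm|emj].
    * case: (ltngtP m i) => [lmi|lim|emi].
      - have [Em _] := diag_sym Hd Ej.
        by have := diag_in Hd Em (k:=i); rewrite lmi lij E => /(_ isT).
      - have [_ /negP + _] := or_cup Ho Ej; by move: (Hm m); rewrite lim lmj => /(_ isT) /negP.
      - have [Em _] := diag_sym Hd Ej; by rewrite (val_inj emi) E in Em.
    * by have [] := cupVW H Ej ljm; rewrite bj.
    * have [_] := diag_sym Hd Ej; by rewrite (val_inj emj) eqxx.
  + by case: (or_rays Ho E Ej lij bi bj).
  + by case: (notnone_lab Ho bj VWW Ej).
- by case: (notnone_lab Ho bi VWV E).
Qed.

Lemma adj_gen (A B C : pred 'I_N) i j :
  (forall m, C m -> A m || B m) -> A i -> B j -> i < j ->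
  exists i' j', [/\ A i', B j', i' < j' & forall m : 'I_N, i' < m < j' -> ~~ C m].
Proof.
move=> HC; have [d] := ubnP (j - i); elim: d i j => // d IH i j lt Ai Bj lij.
case: (boolP [exists m : 'I_N, (i < m < j) && C m]).
  case/existsP=> m /andP [/andP [lim lmj] Cm]; case/orP: (HC m Cm) => [Am|Bm].
  - apply: (IH m j) => //; lia.
  - apply: (IH i m) => //; lia.
move=> /existsPn Hn; exists i, j; split=> // m Hm.
by move: (Hn m); rewrite Hm.
Qed.

Definition erase_c c i j : cdiag N := [ffun m => if (m == i) || (m == j) then None else c m].
Definition erase_b b i j : weight N := [ffun m => if (m == i) || (m == j) then Circ else b m].

Lemma D0_erase c b i j : D0 c b -> c i = Some (Some j) ->
  D0 (erase_c c i j) (erase_b b i j).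
Proof.
move=> H E; have [Hd Ho Hdeg] := H; have [Ej nij] := diag_sym Hd E.
have Hnot : forall x y, c x = Some (Some y) -> (x == i) || (x == j) = false ->
   (y == i) || (y == j) = false.
  move=> x y Ex; apply: contraFF => /orP [/eqP eyi|/eqP eyj].
  - by have [Ey _] := diag_sym Hd Ex; rewrite eyi E in Ey; case: Ey => ->; rewrite eqxx orbT.
  - by have [Ey _] := diag_sym Hd Ex; rewrite eyj Ej in Ey; case: Ey => ->; rewrite eqxx.
split.
- apply: diagI => x y; rewrite !ffunE.
  + case: ifP => // hx Ex; rewrite (Hnot _ _ Ex hx).
    exact: diag_sym Hd Ex.
  + move=> k; case: ifP => // hx Ex hk; rewrite ffunE; case: ifP => // _.
    exact: diag_in Hd Ex hk.
- apply: orientedI => [x|x|x y|x y]; rewrite !ffunE.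
  + case: ifP => [_ _|_ Ex]; [by rewrite /VW !labE | exact: or_none Ho Ex].
  + by case: ifP => // _; apply: or_ray.
  + case: ifP => // hx Ex; rewrite (Hnot _ _ Ex hx); exact: or_cup Ho Ex.
  + case: ifP => // hx Ex; case: ifP => // hy Ey; exact: or_rays Ho Ex Ey.
- apply/deg0P => x y; rewrite !ffunE; case: ifP => // hx Ex lxy.
  exact: (proj1 (deg0P _ _) Hdeg) _ _ Ex lxy.
Qed.

Lemma D0_uniq b c1 c2 : D0 c1 b -> D0 c2 b -> c1 = c2.
Proof.
have [d] := ubnP #|[pred m | VW (b m)]|; elim: d b c1 c2 => // d IH b c1 c2 lt H1 H2.
case: (boolP [exists i : 'I_N, exists j : 'I_N, (i < j) && (b i == Vee) && (b j == Wedge)]).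
  case/existsP=> i /existsP [j /andP [/andP [lij /eqP bi] /eqP bj]].
  have [i' [j' [/eqP bi' /eqP bj' lij' Hm]]] := @adj_gen (fun m => b m == Vee)
    (fun m => b m == Wedge) (fun m => VW (b m)) i j (fun m h => h)
    (introT eqP bi) (introT eqP bj) lij.
  have E1 := ADJ H1 bi' bj' lij' Hm; have E2 := ADJ H2 bi' bj' lij' Hm.
  have := IH (erase_b b i' j') _ _ _ (D0_erase H1 E1) (D0_erase H2 E2).
  move=> /(_ _) E. have Hlt : #|[pred m | VW (erase_b b i' j' m)]| < #|[pred m | VW (b m)]|.
    apply: proper_card; apply/properP; split.
      apply/subsetP=> m; rewrite !inE /= ffunE; case: ifP => // _.
      by rewrite /VW !labE.
    exists i'; first by rewrite !inE /= bi' /VW !labE.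
    by rewrite !inE /= ffunE eqxx /= /VW !labE.
  have {}E := E (leq_trans Hlt _); move: E => /(_ ltac:(lia)) E.
  apply/ffunP=> m; case: (eqVneq m i') => [->|mi]; first by rewrite E1 E2.
  case: (eqVneq m j') => [->|mj].
    by rewrite (proj1 (diag_sym (let: And3 h _ _ := H1 in h) E1)) (proj1 (diag_sym (let: And3 h _ _ := H2 in h) E2)).
  by move: (congr1 (fun f : cdiag N => f m) E); rewrite !ffunE (negPf mi) (negPf mj).
move=> /existsPn Hn.
have key : forall c, D0 c b -> forall m, c m = if VW (b m) then Some None else None.
  move=> c H m; have [Hd Ho _] := H.
  case E: (c m) => [[l|]|].
  - case: (ltngtP m l) => [lml|llm|eml].
    + have [bm bl] := cupVW H E lml; move: (Hn m) => /existsPn /(_ l).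
      by rewrite lml bm bl !eqxx.
    + have [bl bm] := cupVW' H E llm; move: (Hn l) => /existsPn /(_ m).
      by rewrite llm bm bl !eqxx.
    + by have [_] := diag_sym Hd E; rewrite (val_inj eml) eqxx.
  - by rewrite (or_ray Ho E).
  - by rewrite (negPf (or_none Ho E)).
by apply/ffunP=> m; rewrite (key _ H1) (key _ H2).
Qed.

End Uniq.

Section Exist.
Variable N : nat.
Implicit Types (c : cdiag N) (b : weight N) (i j k : 'I_N).

Definition Rc c b := is_diag c && [forall i, match c i with None => ~~ VW (b i)
  | Some None => VW (b i)
  | Some (Some j) => if i < j then (b i == Vee) && (b j == Wedge)
                     else (b i == Wedge) && (b j == Vee) end].

Definition ncups c := #|[pred i | if c i is Some (Some _) then true else false]|.

Lemma ray_notin c x y k : is_diag c -> c x = Some (Some y) -> x < k < y -> c k <> Some None.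
Proof. by move=> Hd E hk Ek; have := diag_in Hd E hk; rewrite Ek. Qed.

Lemma Rc_cup c b i j : Rc c b -> c i = Some (Some j) ->
  if i < j then (b i == Vee) && (b j == Wedge) else (b i == Wedge) && (b j == Vee).
Proof. by case/andP=> _ /forallP /(_ i) + E; rewrite E. Qed.

Lemma exists_D0 b : exists c, D0 c b.
Proof.
pose c0 : cdiag N := [ffun i => if VW (b i) then Some None else None].
have R0 : Rc c0 b.
  apply/andP; split.
    by apply: diagI => x y; rewrite ffunE; case: ifP.
  by apply/forallP=> x; rewrite ffunE; case: ifP => h /=; rewrite ?h.
case: (@arg_maxnP _ c0 (fun c => Rc c b) ncups R0) => cm Rcm Hmax.
have Hd : is_diag cm by move: Rcm; rewrite /Rc => /andP [].
have HR : forall i, (match cm i with None => ~~ VW (b i)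
  | Some None => VW (b i)
  | Some (Some j) => if i < j then (b i == Vee) && (b j == Wedge)
                     else (b i == Wedge) && (b j == Vee) end : bool).
  move=> i; move: Rcm; rewrite /Rc => /andP [_ /forallP /(_ i) h]; exact h.
exists cm; rewrite /D0; split => //.
- apply: orientedI => [x Ex|x Ex|x y Ex|x y Ex Ey lxy bx bY].
  + by have := HR x; rewrite Ex.
  + by have := HR x; rewrite Ex.
  + have := HR x; rewrite Ex; case: ifP => _ /andP [/eqP -> /eqP ->];
    by rewrite /VW !labE.
  + have HC : forall m, cm m == Some None -> ((cm m == Some None) && (b m == Vee)) || ((cm m == Some None) && (b m == Wedge)).
      by move=> m /eqP Em; have := HR m; rewrite Em /VW eqxx.
    have [i' [j' [/andP [/eqP Ei bi] /andP [/eqP Ej bj] lij Hm]]] :=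
      @adj_gen _ (fun m => (cm m == Some None) && (b m == Vee))
      (fun m => (cm m == Some None) && (b m == Wedge)) (fun m => cm m == Some None) x y
      HC (introT andP (conj (introT eqP Ex) (introT eqP bx)))
      (introT andP (conj (introT eqP Ey) (introT eqP bY))) lxy.
    have ni'j' : i' != j' by rewrite neq_ltn lij.
    pose c2 : cdiag N := [ffun m => if m == i' then Some (Some j')
      else if m == j' then Some (Some i') else cm m].
    have Hnot : forall u v, cm u = Some (Some v) -> (v != i') && (v != j').
      move=> u v Eu; have [Ev _] := diag_sym Hd Eu.
      by apply/andP; split; apply/eqP => evi; rewrite evi ?Ei ?Ej in Ev.
    have Hnotu : forall u v, cm u = Some (Some v) -> (u != i') && (u != j').
      move=> u v Eu; by apply/andP; split; apply/eqP => evi; rewrite evi ?Ei ?Ej in Eu.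
    have R2 : Rc c2 b.
      apply/andP; split.
        apply: diagI => u v; rewrite !ffunE.
        * case: (eqVneq u i') => [->|ui].
            by case=> <-; have nj := ni'j'; rewrite eq_sym in nj; rewrite (negPf nj) eqxx ni'j'.
          case: (eqVneq u j') => [->|uj].
            by case=> <-; rewrite eqxx eq_sym ni'j'.
          move=> Eu; have /andP [vi vj] := Hnot _ _ Eu.
          rewrite (negPf vi) (negPf vj); exact: diag_sym Hd Eu.
        * move=> k; case: (eqVneq u i') => [->|ui].
            case=> <- hk; rewrite ffunE.
            have ki : k != i' by apply/negP => /eqP e; move: hk; rewrite e ltnn.
            have kj : k != j' by apply/negP => /eqP e; move: hk; rewrite e ltnn andbF.
            rewrite (negPf ki) (negPf kj).
            have := Hm k hk; case Ek: (cm k) => [[l|]|] //= _.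
            have [El _] := diag_sym Hd Ek.
            have /andP [li lj] := Hnot _ _ Ek.
            case/andP: hk => ik kj'.
            case: (ltngtP l i') => [lli|lil|eli]; last by rewrite (val_inj eli) eqxx in li.
              by case: (ray_notin Hd El (k:=i')); rewrite ?lli ?ik.
            case: (ltngtP l j') => [llj|ljl|elj]; last by rewrite (val_inj elj) eqxx in lj.
              by rewrite ?lil ?llj.
            by case: (ray_notin Hd Ek (k:=j')) => //; rewrite kj' ljl.
          case: (eqVneq u j') => [->|uj].
            by case=> <- /andP [h1 h2]; move: (ltn_trans h1 h2); rewrite ltnNge (ltnW lij).
          move=> Eu hk; rewrite ffunE.
          case: (eqVneq k i') => [ek|ki].
            by case: (ray_notin Hd Eu hk); rewrite ek.
          case: (eqVneq k j') => [ek|kj].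
            by case: (ray_notin Hd Eu hk); rewrite ek.
          exact: diag_in Hd Eu hk.
      apply/forallP=> u; rewrite !ffunE.
      case: (eqVneq u i') => [->|ui].
        by rewrite lij bi bj.
      case: (eqVneq u j') => [->|uj].
        by rewrite ltnNge (ltnW lij) /= bi bj.
      exact: HR u.
    have H2 : ncups c2 <= ncups cm := Hmax c2 R2; move: H2; rewrite leqNgt => /negP; apply.
    apply: proper_card; apply/properP; split.
      apply/subsetP=> u; rewrite !inE /= ffunE.
      case Eu: (cm u) => [[v|]|] // _.
      by have /andP [/negPf -> /negPf ->] := Hnotu _ _ Eu.
    by exists i'; rewrite !inE /= ?ffunE ?eqxx ?Ei.
- apply/deg0P => x y Ex lxy; have := HR x; rewrite Ex lxy.
  by case/andP => /eqP -> _; rewrite labE.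
Qed.

Lemma underline_D0 b : D0 (underline b) b.
Proof.
rewrite /underline; case: pickP => [c /and3P [h1 h2 /eqP h3]|H] /=; first by split.
have [c [h1 h2 h3]] := exists_D0 b; by have := H c; rewrite h1 h2 h3 eqxx.
Qed.

Lemma underline_eq b c : D0 c b -> underline b = c.
Proof. move=> H; exact: D0_uniq (underline_D0 b) H. Qed.

End Exist.

Lemma sum1 m : \sum_(i < m) 1 = m.
Proof. by rewrite sum1_card card_ord. Qed.

Lemma sum_eq1 (T : finType) (r : T) : \sum_(i : T) ((i == r) : nat) = 1.
Proof. by rewrite (bigD1 r) //= eqxx big1 // => i /negPf ->. Qed.

Lemma card_sum (T : finType) (P : pred T) : #|[pred i | P i]| = \sum_(i : T) (P i : nat).
Proof. by rewrite -sum1_card big_mkcond /=; apply: eq_bigr => i _; rewrite inE; case: (P i). Qed.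

Section Pa.
Variable N : nat.
Implicit Types (c : cdiag N) (b : weight N) (i j k : 'I_N).

Definition pa c i : 'I_N := if c i is Some (Some j) then j else i.

Lemma pa_inj c : is_diag c -> injective (pa c).
Proof.
move=> Hd x y; rewrite /pa.
case Ex: (c x) => [[j|]|]; case Ey: (c y) => [[j'|]|] => // E; subst.
- have [E1 _] := diag_sym Hd Ex; have [E2 _] := diag_sym Hd Ey.
  by rewrite E1 in E2; case: E2.
- by have [E1 _] := diag_sym Hd Ex; rewrite Ey in E1.
- by have [E1 _] := diag_sym Hd Ex; rewrite Ey in E1.
- by have [E1 _] := diag_sym Hd Ey; rewrite Ex in E1.
- by have [E1 _] := diag_sym Hd Ey; rewrite Ex in E1.
Qed.

Lemma balW c b t : D0 c b -> c t = Some None -> b t = Wedge ->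
  \sum_(i : 'I_N) ((i < t) && (b i == Vee) : nat) <= \sum_(i : 'I_N) ((i < t) && (b i == Wedge) : nat).
Proof.
move=> H Et bt; have [Hd Ho _] := H.
rewrite [X in _ <= X](reindex_inj (pa_inj Hd)); apply: leq_sum => i _.
case: (boolP ((i < t) && (b i == Vee))) => [/andP [lit /eqP bi]|]; last by [].
rewrite /pa; case Ei: (c i) => [[j|]|].
- case: (ltngtP i j) => [lij|lji|eij].
  + have [_ bj] := cupVW H Ei lij; rewrite bj eqxx andbT.
    case: (ltngtP j t) => [//|ltj|ejt].
      by case: (ray_notin Hd Ei (k:=t)); rewrite ?lit ?ltj.
    by have [E1 _] := diag_sym Hd Ei; rewrite (val_inj ejt) Et in E1.
  + by have [_ ] := cupVW' H Ei lji; rewrite bi.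
  + by have [_] := diag_sym Hd Ei; rewrite (val_inj eij) eqxx.
- by case: (or_rays Ho Ei Et lit bi bt).
- by case: (notnone_lab Ho bi VWV Ei).
Qed.

Lemma balV c b t : D0 c b -> c t = Some None -> b t = Vee ->
  \sum_(i : 'I_N) ((t < i) && (b i == Wedge) : nat) <= \sum_(i : 'I_N) ((t < i) && (b i == Vee) : nat).
Proof.
move=> H Et bt; have [Hd Ho _] := H.
rewrite [X in _ <= X](reindex_inj (pa_inj Hd)); apply: leq_sum => i _.
case: (boolP ((t < i) && (b i == Wedge))) => [/andP [lti /eqP bi]|]; last by [].
rewrite /pa; case Ei: (c i) => [[j|]|].
- case: (ltngtP i j) => [lij|lji|eij].
  + by have [bi' _] := cupVW H Ei lij; rewrite bi in bi'.
  + have [bj _] := cupVW' H Ei lji; rewrite bj eqxx andbT.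
    case: (ltngtP t j) => [//|ljt|ejt].
      have [Ej _] := diag_sym Hd Ei.
      by case: (ray_notin Hd Ej (k:=t)); rewrite ?lti ?ljt.
    by have [E1 _] := diag_sym Hd Ei; rewrite -(val_inj ejt) Et in E1.
  + by have [_] := diag_sym Hd Ei; rewrite (val_inj eij) eqxx.
- by case: (or_rays Ho Et Ei lti bt bi).
- by case: (notnone_lab Ho bi VWW Ei).
Qed.

End Pa.

Section Clos.
Variables n p q : nat.
Local Notation N := (p + n + q).

Definition lft (i : 'I_p) : 'I_N := lshift q (lshift n i).
Definition mid (k : 'I_n) : 'I_N := lshift q (rshift p k).
Definition rgt (j : 'I_q) : 'I_N := rshift (p + n) j.

Lemma val_lft i : val (lft i) = val i. Proof. by []. Qed.
Lemma val_mid k : val (mid k) = p + val k. Proof. by []. Qed.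
Lemma val_rgt j : val (rgt j) = p + n + val j. Proof. by []. Qed.

Variant pos_spec (i : 'I_N) : Type :=
 | PL (i0 : 'I_p) of i = lft i0
 | PM (k : 'I_n) of i = mid k
 | PR (j : 'I_q) of i = rgt j.

Lemma posP i : pos_spec i.
Proof.
case: (split_ordP i) => [i1 ->|j ->]; last exact: PR.
case: (split_ordP i1) => [i0 ->|k ->]; [exact: PL | exact: PM].
Qed.

Lemma split_l m1 m2 (i : 'I_m1) : split (lshift m2 i) = inl i.
Proof. exact: (unsplitK (inl _ i)). Qed.
Lemma split_r m1 m2 (i : 'I_m2) : split (rshift m1 i) = inr i.
Proof. exact: (unsplitK (inr _ i)). Qed.

Lemma cl_lft la i : cl p q la (lft i) = Vee.
Proof. by rewrite /cl ffunE /lft split_l split_l. Qed.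
Lemma cl_mid la k : cl p q la (mid k) = la k.
Proof. by rewrite /cl ffunE /mid split_l split_r. Qed.
Lemma cl_rgt la j : cl p q la (rgt j) = Wedge.
Proof. by rewrite /cl ffunE /rgt split_r. Qed.

Lemma mid_inj : injective mid.
Proof. by move=> x y /(congr1 val) /= /addnI /val_inj. Qed.

Lemma cl_inj : injective (@cl n p q).
Proof. by move=> x y E; apply/ffunP => k; rewrite -!(cl_mid _ k) E. Qed.

Definition unmid (j : 'I_N) : option 'I_n :=
  match split j with inl j1 => match split j1 with inr k => Some k | inl _ => None end
  | inr _ => None end.

Lemma unmid_lft i : unmid (lft i) = None.
Proof. by rewrite /unmid /lft split_l split_l. Qed.
Lemma unmid_mid k : unmid (mid k) = Some k.
Proof. by rewrite /unmid /mid split_l split_r. Qed.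
Lemma unmid_rgt j : unmid (rgt j) = None.
Proof. by rewrite /unmid /rgt split_r. Qed.

Lemma unmid_some j k : unmid j = Some k -> j = mid k.
Proof.
by case: (posP j) => [i ->|k' ->|i ->]; rewrite ?unmid_lft ?unmid_rgt ?unmid_mid // => [[->]].
Qed.

Definition res (c : cdiag N) : cdiag n := [ffun k => match c (mid k) with
  None => None | Some None => Some None | Some (Some j) => Some (unmid j) end].

Lemma res_none c k : res c k = None -> c (mid k) = None.
Proof. by rewrite ffunE; case: (c (mid k)) => [[]|]. Qed.
Lemma res_cup c k l : res c k = Some (Some l) -> c (mid k) = Some (Some (mid l)).
Proof.
by rewrite ffunE; case: (c (mid k)) => [[j|]|] // [] /unmid_some ->.
Qed.
Lemma res_ray c k : res c k = Some None ->
  c (mid k) = Some None \/ exists j, c (mid k) = Some (Some j) /\ unmid j = None.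
Proof. by rewrite ffunE; case: (c (mid k)) => [[j|]|] // => [[] E|_]; [right; exists j|left]. Qed.

Lemma sum3 (F : 'I_N -> nat) : \sum_(i : 'I_N) F i =
  \sum_(i < p) F (lft i) + \sum_(k < n) F (mid k) + \sum_(j < q) F (rgt j).
Proof. by rewrite big_split_ord /= big_split_ord /=. Qed.

End Clos.

Section Res.
Variables n p q : nat.
Local Notation N := (p + n + q).
Local Notation mid := (@mid n p q).
Local Notation lft := (@lft n p q).
Local Notation rgt := (@rgt n p q).
Local Notation res := (@res n p q).

Lemma ltn_mid x y : (mid x < mid y) = (x < y).
Proof. by rewrite /= ltn_add2l. Qed.
Lemma lft_mid i k : lft i < mid k.
Proof. rewrite /=; have := ltn_ord i; lia. Qed.
Lemma mid_rgt k j : mid k < rgt j.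
Proof. rewrite /=; have := ltn_ord k; lia. Qed.
Lemma lft_rgt i j : lft i < rgt j.
Proof. rewrite /=; have := ltn_ord i; lia. Qed.

Lemma res_diag (c : cdiag N) : is_diag c -> is_diag (res c).
Proof.
move=> Hd; apply: diagI => [x y E|x y k E hk].
  have Em := res_cup E; have [Ey ne] := diag_sym Hd Em.
  rewrite ffunE Ey unmid_mid; split => //; apply: contra ne => /eqP ->; exact: eqxx.
have Em := res_cup E; have := diag_in Hd Em (k:=mid k); rewrite !ltn_mid => /(_ hk).
rewrite ffunE; case: (c (mid k)) => [[l|]|] //.
case: (posP l) => [i ->|l0 ->|j ->]; rewrite ?unmid_mid ?ltn_mid //.
- by have := lft_mid i x => /ltnW; rewrite leqNgt => /negPf ->.
- by have := mid_rgt y j => /ltnW; rewrite leqNgt => /negPf ->; rewrite andbF.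
Qed.

Lemma res_D0 (c : cdiag N) (al : weight n) : D0 c (cl p q al) -> D0 (res c) al.
Proof.
move=> H; have [Hd Ho Hdeg] := H; split; first exact: res_diag.
- apply: orientedI => [x E|x E|x y E|x y Ex Ey lxy bx bY].
  + by have := or_none Ho (res_none E); rewrite cl_mid.
  + case: (res_ray E) => [E1|[j [E1 _]]].
      by have := or_ray Ho E1; rewrite cl_mid.
    by have [+ _ _] := or_cup Ho E1; rewrite cl_mid.
  + by have := or_cup Ho (res_cup E); rewrite !cl_mid.
  + have bx' : cl p q al (mid x) = Vee by rewrite cl_mid.
    have bY' : cl p q al (mid y) = Wedge by rewrite cl_mid.
    have lxy' : mid x < mid y by rewrite ltn_mid.
    case: (res_ray Ex) => [Ex1|[j [Ex1 Uj]]]; case: (res_ray Ey) => [Ey1|[j' [Ey1 Uj']]].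
    * exact: or_rays Ho Ex1 Ey1 lxy' bx' bY'.
    * case: (ltngtP j' (mid y)) => [lj|lj|ej]; last first.
      - by have [_] := diag_sym Hd Ey1; rewrite (val_inj ej) eqxx.
      - by have [] := cupVW H Ey1 lj; rewrite bY'.
      have [Ej' _] := diag_sym Hd Ey1.
      have ljx : j' < mid x.
        case: (posP j') Uj' lj => [i ->|k ->|i ->]; rewrite ?unmid_mid //.
          by move=> _ _; apply: lft_mid.
        by move=> _; have := mid_rgt y i => /ltnW; rewrite leqNgt => /negPf ->.
      by case: (ray_notin Hd Ej' (k:=mid x)); rewrite ?ljx ?lxy'.
    * case: (ltngtP j (mid x)) => [lj|lj|ej]; last first.
      - by have [_] := diag_sym Hd Ex1; rewrite (val_inj ej) eqxx.
      - have ljy : mid y < j.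
          case: (posP j) Uj lj => [i ->|k ->|i ->]; rewrite ?unmid_mid //.
            by move=> _; have := lft_mid i x => /ltnW; rewrite leqNgt => /negPf ->.
          by move=> _ _; apply: mid_rgt.
        by case: (ray_notin Hd Ex1 (k:=mid y)); rewrite ?ljy ?lxy'.
      by have [_] := cupVW' H Ex1 lj; rewrite bx'.
    * case: (ltngtP j (mid x)) => [lj|lj|ej]; last first.
      - by have [_] := diag_sym Hd Ex1; rewrite (val_inj ej) eqxx.
      - have ljy : mid y < j.
          case: (posP j) Uj lj => [i ->|k ->|i ->]; rewrite ?unmid_mid //.
            by move=> _; have := lft_mid i x => /ltnW; rewrite leqNgt => /negPf ->.
          by move=> _ _; apply: mid_rgt.
        have := diag_in Hd Ex1 (k:=mid y); rewrite lxy' ljy Ey1 => /(_ isT) /andP [h _].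
        case: (posP j') Ey1 Uj' h => [i ->|k ->|i ->] Ey2; rewrite ?unmid_mid //.
          by move=> _; have := lft_mid i x => /ltnW; rewrite leqNgt => /negPf ->.
        by move=> _ _; have [] := cupVW H Ey2 (mid_rgt y i); rewrite bY'.
      by have [_] := cupVW' H Ex1 lj; rewrite bx'.
- apply/deg0P => x y E lxy; have Em := res_cup E.
  have [bx _] := cupVW H Em (etrans (ltn_mid x y) lxy).
  by rewrite cl_mid in bx; rewrite bx labE.
Qed.

End Res.

Section Res2.
Variables n p q : nat.
Local Notation N := (p + n + q).
Local Notation mid := (@mid n p q).
Local Notation lft := (@lft n p q).
Local Notation rgt := (@rgt n p q).
Local Notation res := (@res n p q).

Lemma noray N' (c : cdiag N') i : no_rays c -> c i <> Some None.
Proof. by move=> /forallP /(_ i) /eqP. Qed.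

Lemma res_oriented (c : cdiag N) la : is_diag c -> oriented c (cl p q la) -> no_rays c ->
  oriented (res c) la.
Proof.
move=> Hd Ho Hr; apply: orientedI => [x E|x E|x y E|x y Ex Ey lxy bx bY].
- by have := or_none Ho (res_none E); rewrite cl_mid.
- case: (res_ray E) => [E1|[j [E1 _]]]; first by case: (noray Hr E1).
  by have [+ _ _] := or_cup Ho E1; rewrite cl_mid.
- by have := or_cup Ho (res_cup E); rewrite !cl_mid.
- case: (res_ray Ex) => [E1|[j [Ex1 Uj]]]; first by case: (noray Hr E1).
  case: (res_ray Ey) => [E1|[j' [Ey1 Uj']]]; first by case: (noray Hr E1).
  have [_ _ hx] := or_cup Ho Ex1; have [_ _ hy] := or_cup Ho Ey1.
  rewrite !cl_mid bx bY in hx hy.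
  case: (posP j') Ey1 Uj' hy => [i' ->|k ->|i' ->] Ey1 U hy; rewrite ?unmid_mid in U => //;
    rewrite ?cl_lft ?cl_rgt ?eqxx in hy => //.
  case: (posP j) Ex1 Uj hx => [i ->|k ->|i ->] Ex1 U' hx; rewrite ?unmid_mid in U' => //;
    rewrite ?cl_lft ?cl_rgt ?eqxx in hx => //.
  have := diag_in Hd Ex1 (k:=mid y); rewrite (etrans (@ltn_mid n p q x y) lxy) (@mid_rgt n p q) Ey1 => /(_ isT).
  by have := @lft_mid n p q i' x => /ltnW; rewrite leqNgt => /negPf ->.
Qed.

End Res2.

Section LabEq.
Variable n : nat.
Implicit Types (a : cdiag n) (b : weight n).

Definition iscup a k := if a k is Some (Some _) then true else false.

Lemma cupW a b : is_diag a -> oriented a b ->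
  \sum_(k : 'I_n) (iscup a k : nat) = 2 * \sum_(k : 'I_n) (iscup a k && (b k == Wedge) : nat).
Proof.
move=> Hd Ho.
have E1 : \sum_(k : 'I_n) (iscup a k && (b k == Wedge) : nat) =
          \sum_(k : 'I_n) (iscup a k && (b k == Vee) : nat).
  rewrite (reindex_inj (pa_inj Hd)); apply: eq_bigr => k _.
  rewrite /iscup /pa; case E: (a k) => [[j|]|] /=; rewrite ?E //=.
  have [Ej _] := diag_sym Hd E; rewrite Ej /=.
  have [] := or_cup Ho E => /vw_cases [] -> /vw_cases [] ->; by rewrite !labE.
rewrite mul2n -addnn {2}E1 -big_split /=; apply: eq_bigr => k _.
rewrite /iscup; case E: (a k) => [[j|]|] /=; rewrite ?E //=.
by have [] := or_cup Ho E => /vw_cases [] -> _; rewrite !labE.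
Qed.

Lemma splitW a b : oriented a b ->
  \sum_(k : 'I_n) (b k == Wedge : nat) =
  \sum_(k : 'I_n) (iscup a k && (b k == Wedge) : nat) +
  \sum_(k : 'I_n) ((a k == Some None) && (b k == Wedge) : nat).
Proof.
move=> Ho; rewrite -big_split /=; apply: eq_bigr => k _.
rewrite /iscup; case E: (a k) => [[j|]|] /=; rewrite ?E /= ?addn0 //.
have := or_none Ho E; rewrite /VW; by case: (b k == Wedge); rewrite ?orbT.
Qed.

Lemma pat a b1 b2 r : oriented a b1 -> oriented a b2 -> a r = Some None ->
  b1 r = Vee -> b2 r = Wedge ->
  \sum_(k : 'I_n) ((a k == Some None) && (b1 k == Wedge) : nat) <
  \sum_(k : 'I_n) ((a k == Some None) && (b2 k == Wedge) : nat).
Proof.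
move=> H1 H2 Er b1r b2r.
apply: (@leq_trans (\sum_(k : 'I_n) (((a k == Some None) && (k < r) : nat) + (k == r)))).
  rewrite big_split /= sum_eq1 addn1 ltnS; apply: leq_sum => k _.
  case: (boolP ((a k == Some None) && (b1 k == Wedge))) => [/andP [/eqP Ek /eqP bk]|//] /=.
  case: (ltngtP k r) => [_|lrk|ekr]; first by rewrite Ek eqxx.
    by case: (or_rays H1 Er Ek lrk b1r bk).
  by rewrite (val_inj ekr) b1r in bk.
apply: leq_sum => k _.
case: (eqVneq k r) => [->|nkr]; first by rewrite Er b2r !eqxx ltnn.
rewrite addn0; case: (boolP ((a k == Some None) && (k < r))) => [/andP [/eqP Ek lkr]|//] /=.
rewrite Ek eqxx /=; have := or_ray H2 Ek => /vw_cases [] bk; rewrite bk ?labE //.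
by case: (or_rays H2 Ek Er lkr bk b2r).
Qed.

Lemma labeq a b1 b2 : is_diag a -> oriented a b1 -> oriented a b2 ->
  \sum_(k : 'I_n) (b1 k == Wedge : nat) = \sum_(k : 'I_n) (b2 k == Wedge : nat) ->
  forall r, a r = Some None -> b1 r = b2 r.
Proof.
move=> Hd H1 H2 E r Er.
have ER : \sum_(k : 'I_n) ((a k == Some None) && (b1 k == Wedge) : nat) =
          \sum_(k : 'I_n) ((a k == Some None) && (b2 k == Wedge) : nat).
  move: E; rewrite (splitW H1) (splitW H2).
  have := cupW Hd H1; have := cupW Hd H2; lia.
have := or_ray H1 Er; have := or_ray H2 Er.
move=> /vw_cases [] e2 /vw_cases [] e1; rewrite e1 e2 //.
- by have := pat H2 H1 Er e2 e1; rewrite ER ltnn.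
- by have := pat H1 H2 Er e1 e2; rewrite ER ltnn.
Qed.

End LabEq.

Lemma sum_lt m (P f : pred 'I_m) r : f r -> ~~ P r ->
  \sum_(k : 'I_m) (P k && f k : nat) < \sum_(k : 'I_m) (f k : nat).
Proof.
move=> fr Pr.
apply: (@leq_trans (\sum_(k : 'I_m) ((P k && f k : nat) + (k == r)))).
  by rewrite big_split /= sum_eq1 addn1.
apply: leq_sum => k _; case: (eqVneq k r) => [->|_]; first by rewrite (negPf Pr) fr.
by rewrite addn0; case: (P k).
Qed.

Lemma sum_le m (P f : pred 'I_m) :
  \sum_(k : 'I_m) (P k && f k : nat) <= \sum_(k : 'I_m) (f k : nat).
Proof. by apply: leq_sum => k _; case: (P k). Qed.

Section Closed.
Variables n p q : nat.
Local Notation N := (p + n + q).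
Local Notation mid := (@mid n p q).
Local Notation lft := (@lft n p q).
Local Notation rgt := (@rgt n p q).

Lemma sum3cl (P : pred 'I_N) la x :
  \sum_(i : 'I_N) (P i && (cl p q la i == x) : nat) =
  \sum_(i < p) (P (lft i) && (Vee == x) : nat) +
  \sum_(k < n) (P (mid k) && (la k == x) : nat) +
  \sum_(j < q) (P (rgt j) && (Wedge == x) : nat).
Proof.
rewrite (@sum3 n p q); congr (_ + _ + _); apply: eq_bigr => i _;
  by rewrite ?cl_lft ?cl_mid ?cl_rgt.
Qed.

Lemma closed_cl (al : weight n) :
  \sum_(k < n) (al k == Wedge : nat) = p -> \sum_(k < n) (al k == Vee : nat) = q ->
  forall c, D0 c (cl p q al) -> no_rays c.
Proof.
move=> hW hV c H; have [Hd Ho _] := H; apply/forallP => t; apply/eqP => Et.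
have := or_ray Ho Et => /vw_cases [] bt.
-
  have := balV H Et bt; rewrite !sum3cl.
  case: (posP t) bt => [i0 ->|t0 ->|j0 ->]; rewrite ?cl_lft ?cl_mid ?cl_rgt // => bt.
  + have e1 : \sum_(i < p) ((lft i0 < lft i) && (Vee == Wedge) : nat) = 0.
      by apply: big1 => i _; rewrite labE andbF.
    have e2 : \sum_(k < n) ((lft i0 < mid k) && (al k == Wedge) : nat) = p.
      by rewrite -[RHS]hW; apply: eq_bigr => k _; rewrite (@lft_mid n p q).
    have e3 : \sum_(j < q) ((lft i0 < rgt j) && (Wedge == Wedge) : nat) = q.
      by rewrite -[RHS]sum1; apply: eq_bigr => j _; rewrite (@lft_rgt n p q) eqxx.
    have e4 : \sum_(i < p) ((lft i0 < lft i) && (Vee == Vee) : nat) < p.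
      rewrite -[X in _ < X]sum1.
      have := @sum_lt p (fun i => i0 < i) (fun _ => true) i0 isT; rewrite ltnn => /(_ isT) h.
      apply: leq_ltn_trans h; apply: leq_sum => i _; by rewrite eqxx !andbT.
    have e5 : \sum_(k < n) ((lft i0 < mid k) && (al k == Vee) : nat) = q.
      by rewrite -[RHS]hV; apply: eq_bigr => k _; rewrite (@lft_mid n p q).
    have e6 : \sum_(j < q) ((lft i0 < rgt j) && (Wedge == Vee) : nat) = 0.
      by apply: big1 => j _; rewrite labE andbF.
    rewrite e1 e2 e3 e5 e6; lia.
  + have e3 : \sum_(j < q) ((mid t0 < rgt j) && (Wedge == Wedge) : nat) = q.
      by rewrite -[RHS]sum1; apply: eq_bigr => j _; rewrite (@mid_rgt n p q) eqxx.
    have e5 : \sum_(k < n) ((mid t0 < mid k) && (al k == Vee) : nat) < q.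
      rewrite -[X in _ < X]hV; under eq_bigr do rewrite (@ltn_mid n p q).
      by apply: (@sum_lt n (fun k => t0 < k) (fun k => al k == Vee) t0); rewrite ?ltnn // bt eqxx.
    have e6 : \sum_(j < q) ((mid t0 < rgt j) && (Wedge == Vee) : nat) = 0.
      by apply: big1 => j _; rewrite labE andbF.
    have e7 : \sum_(i < p) ((mid t0 < lft i) && (Vee == Vee) : nat) = 0.
      apply: big1 => i _; have := @lft_mid n p q i t0 => /ltnW; rewrite leqNgt => /negPf ->.
      by [].
    rewrite e3 e6 e7; lia.
-
  have := balW H Et bt; rewrite !sum3cl.
  case: (posP t) bt => [i0 ->|t0 ->|j0 ->]; rewrite ?cl_lft ?cl_mid ?cl_rgt // => bt.
  + have e1 : \sum_(i < p) ((lft i < mid t0) && (Vee == Vee) : nat) = p.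
      by rewrite -[RHS]sum1; apply: eq_bigr => i _; rewrite (@lft_mid n p q) eqxx.
    have e2 : \sum_(k < n) ((mid k < mid t0) && (al k == Wedge) : nat) < p.
      rewrite -[X in _ < X]hW; under eq_bigr do rewrite (@ltn_mid n p q).
      by apply: (@sum_lt n (fun k => k < t0) (fun k => al k == Wedge) t0); rewrite ?ltnn // bt eqxx.
    have e3 : \sum_(j < q) ((rgt j < mid t0) && (Wedge == Wedge) : nat) = 0.
      apply: big1 => j _; have := @mid_rgt n p q t0 j => /ltnW; rewrite leqNgt => /negPf ->.
      by [].
    have e4 : \sum_(i < p) ((lft i < mid t0) && (Vee == Wedge) : nat) = 0.
      by apply: big1 => i _; rewrite labE andbF.
    rewrite e1 e3 e4; lia.
  + have e1 : \sum_(i < p) ((lft i < rgt j0) && (Vee == Vee) : nat) = p.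
      by rewrite -[RHS]sum1; apply: eq_bigr => i _; rewrite (@lft_rgt n p q) eqxx.
    have e2 : \sum_(k < n) ((mid k < rgt j0) && (al k == Vee) : nat) = q.
      by rewrite -[RHS]hV; apply: eq_bigr => k _; rewrite (@mid_rgt n p q).
    have e3 : \sum_(j < q) ((rgt j < rgt j0) && (Wedge == Vee) : nat) = 0.
      by apply: big1 => j _; rewrite labE andbF.
    have e4 : \sum_(i < p) ((lft i < rgt j0) && (Vee == Wedge) : nat) = 0.
      by apply: big1 => i _; rewrite labE andbF.
    have e5 : \sum_(k < n) ((mid k < rgt j0) && (al k == Wedge) : nat) = p.
      by rewrite -[RHS]hW; apply: eq_bigr => k _; rewrite (@mid_rgt n p q).
    have e6 : \sum_(j < q) ((rgt j < rgt j0) && (Wedge == Wedge) : nat) < q.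
      rewrite -[X in _ < X]sum1.
      have := @sum_lt q (fun j => j < j0) (fun _ => true) j0 isT; rewrite ltnn => /(_ isT) h.
      apply: leq_ltn_trans h; apply: leq_sum => i _; by rewrite eqxx !andbT /= ltn_add2l.
    rewrite e1 e2 e3 e4 e5; lia.
Qed.

End Closed.

Section Fwd.
Variables n p q : nat.
Local Notation N := (p + n + q).
Local Notation mid := (@mid n p q).
Local Notation lft := (@lft n p q).
Local Notation rgt := (@rgt n p q).
Local Notation res := (@res n p q).
Variables (al la : weight n) (c : cdiag N).
Hypothesis heq : forall r, res c r = Some None -> al r = la r.

Lemma ag1 x y : c x = Some (Some y) -> unmid y = None -> cl p q la x = cl p q al x.
Proof.
case: (posP x) => [i ->|k ->|j ->] E U; rewrite ?cl_lft ?cl_rgt ?cl_mid //.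
by rewrite heq // ffunE E U.
Qed.

Lemma out_eq (b1 b2 : weight n) z : unmid z = None -> cl p q b1 z = cl p q b2 z.
Proof. by case: (posP z) => [i ->|k ->|j ->]; rewrite ?cl_lft ?cl_rgt ?unmid_mid. Qed.

Lemma ag2 x y : is_diag c -> c x = Some (Some y) -> (unmid x = None \/ unmid y = None) ->
  cl p q la x = cl p q al x /\ cl p q la y = cl p q al y.
Proof.
move=> Hd E [U|U]; have [Ey _] := diag_sym Hd E.
- by split; [exact: out_eq | exact: ag1 Ey U].
- by split; [exact: ag1 E U | exact: out_eq].
Qed.

Lemma or_transfer (b1 b2 : weight n) : is_diag c -> no_rays c ->
  oriented c (cl p q b1) -> oriented (res c) b2 ->
  (forall x y, c x = Some (Some y) -> (unmid x = None \/ unmid y = None) ->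
     cl p q b2 x = cl p q b1 x /\ cl p q b2 y = cl p q b1 y) ->
  oriented c (cl p q b2).
Proof.
move=> Hd Hr Ho Ha Hag; apply: orientedI => [x E|x E|x y E|x y E].
- case: (posP x) E => [i ->|k ->|j ->] E.
  + by have := or_none Ho E; rewrite !cl_lft.
  + have E' : res c k = None by rewrite ffunE E.
    by have := or_none Ha E'; rewrite cl_mid.
  + by have := or_none Ho E; rewrite !cl_rgt.
- by case: (noray Hr E).
- case: (posP x) E => [i ->|k ->|j ->] E.
  + by have [-> ->] := Hag _ _ E (or_introl (unmid_lft _ _ _)); apply: or_cup Ho E.
  + case: (posP y) E => [i ->|l ->|j ->] E.
    * by have [-> ->] := Hag _ _ E (or_intror (unmid_lft _ _ _)); apply: or_cup Ho E.
    * have E' : res c k = Some (Some l) by rewrite ffunE E unmid_mid.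
      by rewrite !cl_mid; apply: or_cup Ha E'.
    * by have [-> ->] := Hag _ _ E (or_intror (unmid_rgt _ _ _)); apply: or_cup Ho E.
  + by have [-> ->] := Hag _ _ E (or_introl (unmid_rgt _ _ _)); apply: or_cup Ho E.
- by case: (noray Hr E).
Qed.

End Fwd.

Lemma degE N' (c : cdiag N') b : deg c b =
  \sum_(i : 'I_N') ((if c i is Some (Some j) then (i < j) && (b i == Wedge) else false) : nat).
Proof.
rewrite /deg -sum1_card big_mkcond /=; apply: eq_bigr => i _; rewrite inE /=.
by case: (c i) => [[j|]|] //; case: ((i < j) && (b i == Wedge)).
Qed.

Section Deg.
Variables n p q : nat.
Local Notation N := (p + n + q).
Local Notation mid := (@mid n p q).
Local Notation lft := (@lft n p q).
Local Notation rgt := (@rgt n p q).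
Local Notation res := (@res n p q).

Lemma deg_fwd (al la : weight n) (c : cdiag N) :
  D0 c (cl p q al) -> (forall r, res c r = Some None -> al r = la r) ->
  deg c (cl p q la) = deg (res c) la.
Proof.
move=> H heq; have [Hd Ho _] := H.
rewrite !degE (@sum3 n p q).
have -> : \sum_(i < p) (match c (lft i) with Some (Some j) => (lft i < j) && (cl p q la (lft i) == Wedge) | _ => false end : nat) = 0.
  by apply: big1 => i _; case: (c (lft i)) => [[j|]|] //; rewrite cl_lft labE andbF.
have -> : \sum_(j < q) (match c (rgt j) with Some (Some x) => (rgt j < x) && (cl p q la (rgt j) == Wedge) | _ => false end : nat) = 0.
  apply: big1 => j _; case E: (c (rgt j)) => [[x|]|] //.
  case: (ltnP (rgt j) x) => //= lx.
  by have [] := cupVW H E lx; rewrite cl_rgt.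
rewrite add0n addn0; apply: eq_bigr => k _; rewrite [in RHS]ffunE.
case E: (c (mid k)) => [[j|]|] //.
case: (posP j) E => [i ->|l ->|j' ->] E; rewrite ?unmid_lft ?unmid_rgt ?unmid_mid //.
- by have := @lft_mid n p q i k => /ltnW; rewrite leqNgt => /negPf ->.
- by rewrite (@ltn_mid n p q) cl_mid.
- rewrite (@mid_rgt n p q) cl_mid /= -heq; last by rewrite ffunE E unmid_rgt.
  by have [bk _] := cupVW H E (@mid_rgt n p q k j'); rewrite cl_mid in bk; rewrite bk labE.
Qed.

Lemma D0_bwd (al la : weight n) (c : cdiag N) :
  is_diag c -> oriented c (cl p q la) -> no_rays c -> D0 (res c) al ->
  (forall r, res c r = Some None -> al r = la r) -> D0 c (cl p q al).
Proof.
move=> Hd Ho Hr Da heq; have [_ Hao Hadeg] := Da.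
have heq' : forall r, res c r = Some None -> la r = al r by move=> r /heq ->.
split => //.
- apply: (or_transfer Hd Hr Ho Hao) => x y E U; exact: (ag2 heq' Hd E U).
- apply/deg0P => x y E lxy.
  case: (posP x) E lxy => [i ->|k ->|j ->] E lxy; first by rewrite cl_lft labE.
  + rewrite cl_mid; case: (posP y) E lxy => [i ->|l ->|j ->] E lxy.
    * by move: lxy; have := @lft_mid n p q i k => /ltnW; rewrite leqNgt => /negPf ->.
    * have E' : res c k = Some (Some l) by rewrite ffunE E unmid_mid.
      by rewrite (@ltn_mid n p q) in lxy; apply: (proj1 (deg0P _ _) Hadeg) _ _ E' lxy.
    * have Ea := ag1 heq E (unmid_rgt _ _ _); rewrite !cl_mid in Ea.
      have [_ _ h3] := or_cup Ho E; rewrite cl_mid cl_rgt in h3.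
      by rewrite -Ea.
  + case: (posP y) E lxy => [i ->|l ->|j' ->] E lxy.
    * by move: lxy; have := @lft_rgt n p q i j => /ltnW; rewrite leqNgt => /negPf ->.
    * by move: lxy; have := @mid_rgt n p q l j => /ltnW; rewrite leqNgt => /negPf ->.
    * by have [_ _] := or_cup Ho E; rewrite !cl_rgt eqxx.
Qed.

End Deg.

Lemma count_labE n x (la : weight n) : count_lab x la = \sum_(i : 'I_n) (la i == x : nat).
Proof.
rewrite /count_lab -sum1_card big_mkcond /=; apply: eq_bigr => i _; rewrite inE /=.
by case: (la i == x).
Qed.

Lemma count_block n (l0 mu : weight n) x : mu \in block l0 ->
  \sum_(i : 'I_n) (mu i == x : nat) = \sum_(i : 'I_n) (l0 i == x : nat).
Proof.
rewrite inE => /existsP [s /andP [_ /forallP H]].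
rewrite [RHS](reindex_inj (@perm_inj _ s)); apply: eq_bigr => i _.
by rewrite (eqP (H i)).
Qed.

Lemma vw3 x y z : VW x -> VW y -> VW z -> x != y -> x != z -> y = z.
Proof. by move=> /vw_cases [] -> /vw_cases [] -> /vw_cases [] ->; rewrite ?labE. Qed.

Lemma flip n (l0 la : weight n) (a : cdiag n) : la \in block l0 -> is_diag a -> oriented a la ->
  exists2 al, al \in block l0 & D0 a al.
Proof.
move=> Hb Hd Ho.
pose al : weight n := [ffun i => match a i with Some (Some j) => if i < j then Vee else Wedge | _ => la i end].
have alVW : forall i j, a i = Some (Some j) -> VW (al i).
  by move=> i j E; rewrite ffunE E; case: ifP => _; rewrite /VW !labE.
have alne : forall i j, a i = Some (Some j) -> al i != al j.
  move=> i j E; have [Ej nij] := diag_sym Hd E; rewrite !ffunE E Ej.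
  by case: (ltngtP i j) => h; rewrite ?labE //; move: nij; rewrite (val_inj h) eqxx.
pose sg := fun i => match a i with Some (Some j) => if la i == al i then i else j | _ => i end.
have sgal : forall i, al i = la (sg i).
  move=> i; rewrite /sg; case E: (a i) => [[j|]|]; last 2 first.
    - by rewrite ffunE E.
    - by rewrite ffunE E.
  case: (eqVneq (la i) (al i)) => [//|ne].
  have [h1 h2 h3] := or_cup Ho E.
  exact: (vw3 h1 (alVW _ _ E) h2 ne h3).
have sgK : involutive sg.
  move=> i; rewrite {2}/sg; case E: (a i) => [[j|]|]; rewrite ?/sg ?E //.
  case: (eqVneq (la i) (al i)) => [e|ne]; first by rewrite E e eqxx.
  have [Ej _] := diag_sym Hd E; rewrite Ej.
  have [h1 h2 h3] := or_cup Ho E.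
  have lj : la j = al i by exact: (vw3 h1 h2 (alVW _ _ E) h3 ne).
  case: (eqVneq (la j) (al j)) => [e|//].
  by have := alne _ _ E; rewrite -lj e eqxx.
pose s0 : {perm 'I_n} := perm (can_inj sgK).
have Hd0 : D0 a al.
  split=> //.
  - apply: orientedI => [x E|x E|x y E|x y Ex Ey lxy bx bY].
    + by rewrite ffunE E; apply: or_none Ho E.
    + by rewrite ffunE E; apply: or_ray Ho E.
    + by split; [apply: alVW E | have [Ey _] := diag_sym Hd E; apply: alVW Ey | apply: alne].
    + by rewrite !ffunE Ex Ey in bx bY; apply: or_rays Ho Ex Ey lxy bx bY.
  - by apply/deg0P => x y E lxy; rewrite ffunE E lxy labE.
exists al => //.
move: Hb; rewrite !inE => /existsP [s /andP [/forallP Hfix /forallP Hs]].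
apply/existsP; exists (s0 * s)%g; apply/andP; split.
- apply/forallP => i; apply/implyP => hi; rewrite permM permE.
  have si : s i = i by move: (Hfix i) => /implyP /(_ hi) /eqP.
  have : sg i = i.
    rewrite /sg; case E: (a i) => [[j|]|] //.
    have [h1 _ _] := or_cup Ho E; move: (Hs i) => /eqP lai.
    by move: hi; rewrite -si -lai inCC h1.
  by move=> ->; rewrite si.
- apply/forallP => i; rewrite permM permE sgal; exact: Hs.
Qed.

Section Main.
Variables (n : nat) (l0 : weight n).
Local Notation L := (block l0).
Local Notation p := (count_lab Wedge l0).
Local Notation q := (count_lab Vee l0).
Local Notation res := (@res n p q).

Lemma sumW mu : mu \in L -> \sum_(k < n) (mu k == Wedge : nat) = p.
Proof. by move=> h; rewrite count_labE; exact: count_block. Qed.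
Lemma sumV mu : mu \in L -> \sum_(k < n) (mu k == Vee : nat) = q.
Proof. by move=> h; rewrite count_labE; exact: count_block. Qed.

Lemma ocdP (x : cdiag n * weight n * cdiag n) : x \in ocd L ->
  [/\ is_diag x.1.1, is_diag x.2, x.1.2 \in L, oriented x.1.1 x.1.2 & oriented x.2 x.1.2].
Proof. by rewrite inE => /and5P []. Qed.

Lemma pick_ok (a : cdiag n) la : la \in L -> is_diag a -> oriented a la ->
  exists2 al, al \in L & underline al = a /\
  [pick al in L | underline al == a] = Some al.
Proof.
move=> hL hd ho; case: pickP => [al /andP [alL /eqP ua]|H].
  by exists al.
have [al0 h0 D] := flip hL hd ho.
by have := H al0; rewrite h0 (underline_eq D) eqxx.
Qed.

Lemma clD_spec x : x \in ocd L -> exists al, exists be,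
  [/\ al \in L, be \in L, underline al = x.1.1, underline be = x.2 &
   clD p q L x = (underline (cl p q al), cl p q x.1.2, underline (cl p q be))].
Proof.
move=> /ocdP [ha hb hl hoa hob].
have [al alL [ua pa]] := pick_ok hl ha hoa.
have [be beL [ub pb]] := pick_ok hl hb hob.
by exists al, be; split => //; rewrite /clD pa pb.
Qed.

Lemma fwd (al la : weight n) (a : cdiag n) : al \in L -> la \in L -> underline al = a ->
  oriented a la ->
  let c := underline (cl p q al) in
  [/\ res c = a, no_rays c, oriented c (cl p q la) & deg c (cl p q la) = deg a la].
Proof.
move=> alL laL ua hola c.
have Dc : D0 c (cl p q al) := underline_D0 _.
have Da : D0 a al by rewrite -ua; exact: underline_D0.
have [Hda Hoa _] := Da.
have rc : res c = a by rewrite -ua; apply/esym/underline_eq; exact: res_D0 Dc.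
have Hr : no_rays c := closed_cl (sumW alL) (sumV alL) Dc.
have heq : forall r, res c r = Some None -> al r = la r.
  rewrite rc; apply: labeq Hda Hoa hola _.
  by rewrite (sumW alL) (sumW laL).
have [Hdc Hoc _] := Dc.
split => //.
- apply: (or_transfer Hdc Hr Hoc) => [|x y E U]; first by rewrite rc.
  exact: (ag2 heq Hdc E U).
- by rewrite (deg_fwd Dc heq) rc.
Qed.

Theorem main :
  [/\ {in ocd L &, injective (clD p q L)},
      clD p q L @: ocd L = closed_ocd (cl p q @: L)
    & {in ocd L, forall x, ocd_deg (clD p q L x) = ocd_deg x}].
Proof.
split.
- move=> x y hx hy.
  have [al [be [alL beL ua ub ->]]] := clD_spec hx.
  have [al' [be' [alL' beL' ua' ub' ->]]] := clD_spec hy.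
  case=> e1 e2 e3.
  have [_ _ hlx hoax hobx] := ocdP hx; have [_ _ hly hoay hoby] := ocdP hy.
  have [r1 _ _ _] := fwd alL hlx ua hoax.
  have [r2 _ _ _] := fwd beL hlx ub hobx.
  have [r1' _ _ _] := fwd alL' hly ua' hoay.
  have [r2' _ _ _] := fwd beL' hly ub' hoby.
  move: x y hx hy ua ub ua' ub' e1 e2 e3 r1 r2 r1' r2' {hoax hobx hoay hoby hlx hly} => [[a la] b] [[a' la'] b'] /= _ _ ua ub ua' ub' e1 e2 e3 r1 r2 r1' r2'.
  have ell : la = la' := cl_inj e2.
  by rewrite -r1 -r1' -r2 -r2' e1 e3 ell.
- apply/eqP; rewrite eqEsubset; apply/andP; split; apply/subsetP.
    move=> y /imsetP [x hx ->].
    have [al [be [alL beL ua ub ->]]] := clD_spec hx.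
    have [_ _ hl hoa hob] := ocdP hx.
    have [_ Hr1 Ho1 _] := fwd alL hl ua hoa.
    have [_ Hr2 Ho2 _] := fwd beL hl ub hob.
    have [Hd1 _ _] := underline_D0 (cl p q al).
    have [Hd2 _ _] := underline_D0 (cl p q be).
    rewrite !inE /= Hd1 Hd2 Ho1 Ho2 Hr1 Hr2 /= andbT.
    by rewrite andbT; apply/imsetP; exists x.1.2.
  move=> [[a' mu] b']; rewrite !inE /= => /andP [/and5P [Hd1 Hd2 /imsetP [la laL ->] Ho1 Ho2] /andP [Hr1 Hr2]].
  pose x := ((res a', la), res b').
  have hx : x \in ocd L.
    rewrite inE /= laL !res_diag //=.
    by rewrite !res_oriented.
  apply/imsetP; exists x => //.
  have [al [be [alL beL ua ub ->]]] := clD_spec hx.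
  rewrite /= in ua ub *.
  have Da : D0 (res a') al by rewrite -ua; exact: underline_D0.
  have Db : D0 (res b') be by rewrite -ub; exact: underline_D0.
  have hoa : oriented (res a') la := res_oriented Hd1 Ho1 Hr1.
  have hob : oriented (res b') la := res_oriented Hd2 Ho2 Hr2.
  have heqa : forall r, res a' r = Some None -> al r = la r.
    have [h1 h2 _] := Da; apply: labeq h1 h2 hoa _.
    by rewrite (sumW alL) (sumW laL).
  have heqb : forall r, res b' r = Some None -> be r = la r.
    have [h1 h2 _] := Db; apply: labeq h1 h2 hob _.
    by rewrite (sumW beL) (sumW laL).
  by rewrite (underline_eq (D0_bwd Hd1 Ho1 Hr1 Da heqa))
             (underline_eq (D0_bwd Hd2 Ho2 Hr2 Db heqb)).
- move=> x hx.
  have [al [be [alL beL ua ub ->]]] := clD_spec hx.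
  have [_ _ hl hoa hob] := ocdP hx.
  have [_ _ _ d1] := fwd alL hl ua hoa.
  have [_ _ _ d2] := fwd beL hl ub hob.
  by rewrite /ocd_deg /= d1 d2.
Qed.

End Main.

Theorem lemma4p2 (n : nat) (l0 : weight n) :
  let L := block l0 in
  let p := count_lab Wedge l0 in
  let q := count_lab Vee l0 in
  [/\ {in ocd L &, injective (clD p q L)},
      clD p q L @: ocd L = closed_ocd (cl p q @: L)
    & {in ocd L, forall x, ocd_deg (clD p q L x) = ocd_deg x}].
Proof. exact: main. Qed.
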